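(* A distribution $P^0\in L\cap\Delta^{n-1}_+$ is a minimal point of $L\cap\Delta^{n-1}_+$ with respect to the (global) Markov order $\succ_{P^*}$ (i.e. there is no $P^1\in L\cap\Delta^{n-1}_+$, $P^1\neq P^0$, with $P^0\succ_{P^*}P^1$) if and only if $\bigl(P^0+\mathbf{Q}(P^0,P^* )\bigr)\cap L=\{P^0\}$.
   Context: Fix $n\ge 2$ and a positive equilibrium distribution $P^*=(p^*_i)$, $p^*_i>0$, $\sum_i p^*_i=1$. Let $\Delta^{n-1}_+=\{P\in\mathbb{R}^n: p_i>0,\ \sum_i p_i=1\}$. A Markov chain with equilibrium $P^*$ is given by rate constants $q_{ij}\ge 0$ ($i\neq j$) satisfying $\sum_{j\ne i}q_{ij}p^*_j=\bigl(\sum_{j\ne i}q_{ji}\bigr)p^*_i$ for all $i$; its Kolmogorov equation is $\frac{dp_i}{dt}=\sum_{j\ne i}(q_{ij}p_j-q_{ji}p_i)$. Markov preorder: $P^0\succ^0_{P^*}P^1$ if for some Markov chain with equilibrium $P^*$ the solution of the Kolmogorov equation with $P(0)=P^0$ satisfies $P(1)=P^1$. The (global) Markov order $\succ_{P^*}$ is the closed transitive closure of $\succ^0_{P^*}$. For $i\neq j$ let $\gamma^{ji}$ be the vector with $\gamma^{ji}_j=-1$, $\gamma^{ji}_i=1$, other coordinates $0$; ${\rm cone}$ denotes non-negative linear combinations; ${\rm sign}$ is the three-valued sign function; $\mathbf{Q}(P,P^* )={\rm cone}\{\gamma^{ji}\,{\rm sign}(\tfrac{p_j}{p^*_j}-\tfrac{p_i}{p^*_i})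 : 1\le j<i\le n\}$. The condition manifold is $L=\{P:\ \sum_j m_{rj}p_j=M_r,\ r=0,\dots,k\}$ with $m_{0j}=1$, $M_0=1$, and $L\cap\Delta^{n-1}_+\ne\emptyset$. *)

(* Defs.v *)
(* real vectors in R^n are represented as functions nat -> R,
   only the coordinates 0..n-1 being meaningful. *)
From Stdlib Require Import Reals Arith.
Open Scope R_scope.

Fixpoint rsum (n : nat) (f : nat -> R) : R :=
  match n with
  | O => 0
  | S k => rsum k f + f k
  end.

Definition veq (n : nat) (x y : nat -> R) : Prop :=
  forall i, (i < n)%nat -> x i = y i.

Definition simplex_pos (n : nat) (P : nat -> R) : Prop :=
  (forall i, (i < n)%nat -> 0 < P i) /\ rsum n P = 1.

Definition rsum_ne (n i : nat) (f : nat -> R) : R :=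
  rsum n (fun j => if Nat.eqb j i then 0 else f j).

(* q i j (i <> j) is the rate constant q_{ij}; it is a Markov chain with
   equilibrium Ps *)
Definition markov_chain (n : nat) (Ps : nat -> R) (q : nat -> nat -> R) : Prop :=
  (forall i j, (i < n)%nat -> (j < n)%nat -> i <> j -> 0 <= q i j) /\
  (forall i, (i < n)%nat ->
     rsum_ne n i (fun j => q i j * Ps j) = rsum_ne n i (fun j => q j i) * Ps i).

Definition kolmogorov_rhs (n : nat) (q : nat -> nat -> R) (p : nat -> R) (i : nat) : R :=
  rsum_ne n i (fun j => q i j * p j - q j i * p i).

Definition kolmogorov_solution (n : nat) (q : nat -> nat -> R) (P : R -> nat -> R) : Prop :=
  forall i t, (i < n)%nat ->
    derivable_pt_lim (fun s => P s i) t (kolmogorov_rhs n q (P t) i).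

(* Markov preorder  P0 >^0_{Ps} P1  (the solution of a linear ODE is unique,
   so "some solution with P(0)=P0 has P(1)=P1" = "the solution ...") *)
Definition markov_pre (n : nat) (Ps : nat -> R) (P0 P1 : nat -> R) : Prop :=
  exists q : nat -> nat -> R, markov_chain n Ps q /\
  exists P : R -> nat -> R, kolmogorov_solution n q P /\
    veq n (P 0) P0 /\ veq n (P 1) P1.

Definition vconv (n : nat) (xs : nat -> nat -> R) (x : nat -> R) : Prop :=
  forall i, (i < n)%nat -> Un_cv (fun k => xs k i) (x i).

Definition rel_closed (n : nat) (Rl : (nat -> R) -> (nat -> R) -> Prop) : Prop :=
  forall (xs ys : nat -> nat -> R) (x y : nat -> R),
    (forall k, Rl (xs k) (ys k)) -> vconv n xs x -> vconv n ys y ->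
    simplex_pos n x -> simplex_pos n y -> Rl x y.

Definition rel_trans (Rl : (nat -> R) -> (nat -> R) -> Prop) : Prop :=
  forall x y z, Rl x y -> Rl y z -> Rl x z.

(* global Markov order: the smallest closed transitive relation containing
   the Markov preorder (the closed transitive closure) *)
Definition markov_order (n : nat) (Ps : nat -> R) (P0 P1 : nat -> R) : Prop :=
  forall Rl : (nat -> R) -> (nat -> R) -> Prop,
    rel_closed n Rl -> rel_trans Rl ->
    (forall x y, simplex_pos n x -> markov_pre n Ps x y -> Rl x y) ->
    Rl P0 P1.

Definition inL (n k : nat) (m : nat -> nat -> R) (M : nat -> R) (P : nat -> R) : Prop :=
  forall r, (r <= k)%nat -> rsum n (fun j => m r j * P j) = M r.

Definition sgn (x : R) : R :=
  if Rlt_dec 0 x then 1 else if Rlt_dec x 0 then -1 else 0.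

Definition gamma (j i l : nat) : R :=
  (if Nat.eqb l i then 1 else 0) - (if Nat.eqb l j then 1 else 0).

Definition in_P0_plus_Q (n : nat) (Ps P0 P : nat -> R) : Prop :=
  exists c : nat -> nat -> R,
    (forall j i, (j < i)%nat -> (i < n)%nat -> 0 <= c j i) /\
    forall l, (l < n)%nat ->
      P l = P0 l + rsum n (fun i => rsum i (fun j =>
              c j i * sgn (P0 j / Ps j - P0 i / Ps i) * gamma j i l)).

(* Main.v *)
Require Import Defs.
From Stdlib Require Import Reals Arith.
Open Scope R_scope.
From Stdlib Require Import Lra Lia Psatz.

Lemma rsum_ext n f g : (forall k, (k < n)%nat -> f k = g k) -> rsum n f = rsum n g.
Proof. induction n; simpl; intros H; [reflexivity|]. rewrite IHn by (intros; apply H; lia). rewrite H by lia. reflexivity. Qed.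

Lemma rsum_plus n f g : rsum n (fun k => f k + g k) = rsum n f + rsum n g.
Proof. induction n; simpl; [lra|]. rewrite IHn. lra. Qed.

Lemma rsum_minus n f g : rsum n (fun k => f k - g k) = rsum n f - rsum n g.
Proof. induction n; simpl; [lra|]. rewrite IHn. lra. Qed.

Lemma rsum_scal n c f : rsum n (fun k => c * f k) = c * rsum n f.
Proof. induction n; simpl; [lra|]. rewrite IHn. lra. Qed.

Lemma rsum_zero n f : (forall k, (k < n)%nat -> f k = 0) -> rsum n f = 0.
Proof. intros H. rewrite (rsum_ext n f (fun _ => 0)) by auto. induction n; simpl; [lra|]. rewrite IHn by (intros; apply H; lia). lra. Qed.

Lemma rsum_le n f g : (forall k, (k < n)%nat -> f k <= g k) -> rsum n f <= rsum n g.
Proof. induction n; simpl; intros H; [lra|]. assert (rsum n f <= rsum n g) by (apply IHn; intros; apply H; lia). specialize (H n ltac:(lia)). lra. Qed.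

Lemma rsum_nonpos n f : (forall k, (k < n)%nat -> f k <= 0) -> rsum n f <= 0.
Proof. intros H. apply Rle_trans with (rsum n (fun _ => 0)). apply rsum_le; auto. rewrite rsum_zero; auto; lra. Qed.

Lemma rsum_nonneg n f : (forall k, (k < n)%nat -> 0 <= f k) -> 0 <= rsum n f.
Proof. intros H. apply Rle_trans with (rsum n (fun _ => 0)). rewrite rsum_zero; auto; lra. apply rsum_le; auto. Qed.

Lemma rsum_single n f b : (b < n)%nat -> (forall k, (k < n)%nat -> k <> b -> f k = 0) -> rsum n f = f b.
Proof.
  induction n; intros Hb H; [lia|]. simpl.
  destruct (Nat.eq_dec b n) as [->|Hne].
  - rewrite rsum_zero; [lra|]. intros; apply H; lia.
  - rewrite IHn by (try lia; intros; apply H; lia). rewrite (H n) by lia. lra.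
Qed.

Lemma rsum_neg_ex n f : rsum n f < 0 -> exists k, (k < n)%nat /\ f k < 0.
Proof.
  intros H. destruct (Classical_Prop.classic (exists k, (k < n)%nat /\ f k < 0)) as [E|E]; auto.
  exfalso. assert (0 <= rsum n f); [|lra]. apply rsum_nonneg. intros k Hk.
  destruct (Rle_dec 0 (f k)); auto. exfalso; apply E; exists k; split; auto; lra.
Qed.

Lemma rsum_mono_range m N f : (m <= N)%nat -> (forall k, (m <= k < N)%nat -> 0 <= f k) -> rsum m f <= rsum N f.
Proof.
  intros Hm. induction N; intros H.
  - replace m with 0%nat by lia. lra.
  - destruct (Nat.eq_dec m (S N)) as [->|Hne]; [lra|]. simpl.
    assert (rsum m f <= rsum N f) by (apply IHN; [lia|intros; apply H; lia]).
    specialize (H N ltac:(lia)). lra.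
Qed.

Lemma rsum_fubini n m (f : nat -> nat -> R) :
  rsum n (fun i => rsum m (fun j => f i j)) = rsum m (fun j => rsum n (fun i => f i j)).
Proof.
  induction n; simpl.
  - rewrite rsum_zero; auto.
  - rewrite IHn. rewrite <- rsum_plus. reflexivity.
Qed.

Lemma rsum_ne_eq n i f : rsum_ne n i f = rsum n (fun j => if Nat.eqb j i then 0 else f j).
Proof. reflexivity. Qed.

Lemma rsum_ne_ext n i f g : (forall k, (k < n)%nat -> k <> i -> f k = g k) -> rsum_ne n i f = rsum_ne n i g.
Proof. intros H. unfold rsum_ne. apply rsum_ext. intros k Hk. destruct (Nat.eqb_spec k i); auto. Qed.

Lemma rsum_ne_le n i f g : (forall k, (k < n)%nat -> k <> i -> f k <= g k) -> rsum_ne n i f <= rsum_ne n i g.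
Proof. intros H. unfold rsum_ne. apply rsum_le. intros k Hk. destruct (Nat.eqb_spec k i); auto; lra. Qed.

Lemma rsum_ne_plus n i f g : rsum_ne n i (fun k => f k + g k) = rsum_ne n i f + rsum_ne n i g.
Proof. unfold rsum_ne. rewrite <- rsum_plus. apply rsum_ext. intros. destruct (Nat.eqb k i); lra. Qed.

Lemma rsum_ne_minus n i f g : rsum_ne n i (fun k => f k - g k) = rsum_ne n i f - rsum_ne n i g.
Proof. unfold rsum_ne. rewrite <- rsum_minus. apply rsum_ext. intros. destruct (Nat.eqb k i); lra. Qed.

Lemma rsum_ne_scal n i c f : rsum_ne n i (fun k => c * f k) = c * rsum_ne n i f.
Proof. unfold rsum_ne. rewrite <- rsum_scal. apply rsum_ext. intros. destruct (Nat.eqb k i); lra. Qed.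

Lemma rsum_ne_single n i f b : (b < n)%nat -> b <> i -> (forall k, (k < n)%nat -> k <> b -> k <> i -> f k = 0) -> rsum_ne n i f = f b.
Proof.
  intros Hb Hbi H. unfold rsum_ne. rewrite (rsum_single n _ b Hb).
  - destruct (Nat.eqb_spec b i); congruence.
  - intros k Hk Hkb. destruct (Nat.eqb_spec k i); auto.
Qed.

Lemma rsum_ne_zero n i f : (forall k, (k < n)%nat -> k <> i -> f k = 0) -> rsum_ne n i f = 0.
Proof. intros H. unfold rsum_ne. apply rsum_zero. intros k Hk. destruct (Nat.eqb_spec k i); auto. Qed.

Lemma rsum_ne_swap n (f : nat -> nat -> R) :
  rsum n (fun l => rsum_ne n l (fun j => f l j)) = rsum n (fun j => rsum_ne n j (fun l => f l j)).
Proof.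
  unfold rsum_ne. rewrite rsum_fubini. apply rsum_ext. intros j Hj. apply rsum_ext. intros l Hl.
  rewrite Nat.eqb_sym. reflexivity.
Qed.

Lemma argmax_ex n (P : nat -> Prop) (f : nat -> R) :
  (forall k, P k \/ ~ P k) ->
  (exists k, (k < n)%nat /\ P k) ->
  exists k, (k < n)%nat /\ P k /\ forall j, (j < n)%nat -> P j -> f j <= f k.
Proof.
  intros Hd. induction n; intros [k [Hk HP]]; [lia|].
  destruct (Classical_Prop.classic (exists k, (k < n)%nat /\ P k)) as [E|E].
  - destruct (IHn E) as [m [Hm [HPm Hmax]]].
    destruct (Hd n) as [Hn|Hn].
    + destruct (Rle_dec (f n) (f m)).
      * exists m; repeat split; auto. intros j Hj HPj. destruct (Nat.eq_dec j n) as [->|]; auto. apply Hmax; auto; lia.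
      * exists n; repeat split; auto. intros j Hj HPj. destruct (Nat.eq_dec j n) as [->|]; [lra|].
        specialize (Hmax j ltac:(lia) HPj). lra.
    + exists m; repeat split; auto. intros j Hj HPj. destruct (Nat.eq_dec j n) as [->|]; [contradiction|]. apply Hmax; auto; lia.
  - exists n. assert (k = n). { destruct (Nat.eq_dec k n); auto. exfalso; apply E; exists k; split; auto; lia. } subst.
    repeat split; auto. intros j Hj HPj. destruct (Nat.eq_dec j n) as [->|]; [lra|]. exfalso; apply E; exists j; split; auto; lia.
Qed.

Lemma argmin_ex n (P : nat -> Prop) (f : nat -> R) :
  (forall k, P k \/ ~ P k) ->
  (exists k, (k < n)%nat /\ P k) ->
  exists k, (k < n)%nat /\ P k /\ forall j, (j < n)%nat -> P j -> f k <= f j.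
Proof.
  intros Hd He. destruct (argmax_ex n P (fun k => - f k) Hd He) as [k [Hk [HP H]]].
  exists k; repeat split; auto. intros j Hj HPj. specialize (H j Hj HPj). lra.
Qed.

Lemma lowbound n (P : nat -> Prop) (g : nat -> R) :
  (forall k, (k < n)%nat -> P k -> 0 < g k) -> exists m, 0 < m /\ forall k, (k < n)%nat -> P k -> m <= g k.
Proof.
  induction n; intros H.
  - exists 1; split; [lra|]. intros; lia.
  - destruct IHn as [m [Hm Hb]]. intros; apply H; auto; lia.
    destruct (Classical_Prop.classic (P n)) as [Pn|Pn].
    + exists (Rmin m (g n)). split. { apply Rmin_glb_lt; auto. }
      intros k Hk HP. destruct (Nat.eq_dec k n) as [->|]. apply Rmin_r. apply Rle_trans with m. apply Rmin_l. apply Hb; auto; lia.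
    + exists m; split; auto. intros k Hk HP. destruct (Nat.eq_dec k n) as [->|]; [contradiction|]. apply Hb; auto; lia.
Qed.
Definition InQ n (r : nat -> R) (v : nat -> R) := exists c : nat -> nat -> R,
  (forall j i, (j < i)%nat -> (i < n)%nat -> 0 <= c j i) /\
  forall l, (l < n)%nat -> v l = rsum n (fun i => rsum i (fun j => c j i * sgn (r j - r i) * gamma j i l)).

Definition sumU n (U : nat -> bool) (v : nat -> R) := rsum n (fun l => if U l then v l else 0).
Definition upclosed n (r : nat -> R) (U : nat -> bool) :=
  forall i j, (i < n)%nat -> (j < n)%nat -> U i = true -> r i < r j -> U j = true.

Fixpoint nzc (n : nat) (v : nat -> R) : nat :=
  match n with O => O | S k => (nzc k v + if Req_EM_T (v k) 0 then 0 else 1)%nat end.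

Lemma nzc_lt n v v' :
  (forall l, (l < n)%nat -> v' l <> 0 -> v l <> 0) ->
  (exists l, (l < n)%nat /\ v l <> 0 /\ v' l = 0) -> (nzc n v' < nzc n v)%nat.
Proof.
  induction n; intros H [l [Hl [H1 H2]]]; [lia|]. simpl.
  assert (Hle : forall m, (m <= n)%nat -> (nzc m v' <= nzc m v)%nat).
  { induction m; intros Hm; simpl; [lia|]. specialize (IHm ltac:(lia)).
    destruct (Req_EM_T (v' m) 0); destruct (Req_EM_T (v m) 0); try lia.
    exfalso; apply (H m); auto; lia. }
  destruct (Nat.eq_dec l n) as [->|Hne].
  - specialize (Hle n (le_n n)).
    destruct (Req_EM_T (v' n) 0); destruct (Req_EM_T (v n) 0); try lia; contradiction.
  - assert (nzc n v' < nzc n v)%nat.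
    { apply IHn. intros; apply H; auto; lia. exists l; repeat split; auto; lia. }
    destruct (Req_EM_T (v' n) 0); destruct (Req_EM_T (v n) 0); try lia.
    exfalso; apply (H n); auto; lia.
Qed.

Lemma gamma_val j i l : gamma j i l = (if Nat.eqb l i then 1 else 0) - (if Nat.eqb l j then 1 else 0).
Proof. reflexivity. Qed.

Lemma InQ_ext n r v w : (forall l, (l < n)%nat -> v l = w l) -> InQ n r w -> InQ n r v.
Proof. intros H [c [Hc Hv]]. exists c; split; auto. intros l Hl. rewrite H by auto. auto. Qed.

Lemma InQ_zero n r : InQ n r (fun _ => 0).
Proof.
  exists (fun _ _ => 0). split; [intros; lra|]. intros l Hl.
  symmetry; apply rsum_zero; intros; apply rsum_zero; intros; lra.
Qed.

Lemma InQ_plus n r v w : InQ n r v -> InQ n r w -> InQ n r (fun l => v l + w l).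
Proof.
  intros [c [Hc Hv]] [d [Hd Hw]]. exists (fun j i => c j i + d j i). split.
  - intros j i H1 H2. specialize (Hc j i H1 H2); specialize (Hd j i H1 H2). lra.
  - intros l Hl. rewrite Hv, Hw by auto. rewrite <- rsum_plus. apply rsum_ext; intros i Hi.
    rewrite <- rsum_plus. apply rsum_ext; intros j Hj. ring.
Qed.

Lemma sgn_pos x : 0 < x -> sgn x = 1.
Proof. unfold sgn; intros; destruct (Rlt_dec 0 x); [auto|lra]. Qed.
Lemma sgn_neg x : x < 0 -> sgn x = -1.
Proof. unfold sgn; intros; destruct (Rlt_dec 0 x); [lra|]. destruct (Rlt_dec x 0); [auto|lra]. Qed.

Lemma double_single n (F : nat -> nat -> R) j0 i0 :
  (j0 < i0)%nat -> (i0 < n)%nat ->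
  (forall i j, (j < i)%nat -> (i < n)%nat -> (i <> i0 \/ j <> j0) -> F j i = 0) ->
  rsum n (fun i => rsum i (fun j => F j i)) = F j0 i0.
Proof.
  intros H1 H2 H. rewrite (rsum_single n _ i0 H2).
  - rewrite (rsum_single i0 _ j0 H1); [reflexivity|]. intros k Hk Hne. apply H; auto.
  - intros k Hk Hne. apply rsum_zero. intros j Hj. apply H; auto.
Qed.

Lemma InQ_gen n r s t d : (s < n)%nat -> (t < n)%nat -> r t < r s -> 0 <= d ->
  InQ n r (fun l => d * ((if Nat.eqb l t then 1 else 0) - (if Nat.eqb l s then 1 else 0))).
Proof.
  intros Hs Ht Hr Hd.
  assert (Hst : s <> t) by (intro; subst; lra).
  set (j0 := Nat.min s t). set (i0 := Nat.max s t).
  exists (fun j i => if (Nat.eqb j j0 && Nat.eqb i i0)%bool then d else 0). split.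
  - intros. destruct (Nat.eqb j j0 && Nat.eqb i i0)%bool; lra.
  - intros l Hl. rewrite (double_single n _ j0 i0).
    + rewrite Nat.eqb_refl, Nat.eqb_refl. simpl. rewrite gamma_val.
      unfold j0, i0. destruct (Nat.le_gt_cases s t).
      * rewrite Nat.min_l, Nat.max_r by lia. rewrite sgn_pos by lra. ring.
      * rewrite Nat.min_r, Nat.max_l by lia. rewrite sgn_neg by lra. ring.
    + unfold j0, i0; lia.
    + unfold i0; lia.
    + intros i j Hji Hi [E|E].
      * destruct (Nat.eqb_spec i i0); [contradiction|]. rewrite Bool.andb_false_r. ring.
      * destruct (Nat.eqb_spec j j0); [contradiction|]. simpl. ring.
Qed.

Lemma sumU_ind n U v t : (t < n)%nat ->
  sumU n U (fun l => if Nat.eqb l t then v else 0) = if U t then v else 0.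
Proof.
  intros Ht. unfold sumU. rewrite (rsum_single n _ t Ht). rewrite Nat.eqb_refl. reflexivity.
  intros k Hk Hne. destruct (Nat.eqb_spec k t); [contradiction|]. destruct (U k); auto.
Qed.

Lemma sumU_lin n U v w a : sumU n U (fun l => v l + a * w l) = sumU n U v + a * sumU n U w.
Proof. unfold sumU. rewrite <- rsum_scal, <- rsum_plus. apply rsum_ext; intros. destruct (U k); ring. Qed.

Lemma flow_lemma n (r : nat -> R) : forall N v, (nzc n v <= N)%nat ->
  rsum n v = 0 -> (forall U, upclosed n r U -> sumU n U v <= 0) -> InQ n r v.
Proof.
  induction N; intros v HN Hsum HU.
  -
    apply InQ_ext with (fun _ => 0); [|apply InQ_zero].
    intros l Hl. destruct (Req_EM_T (v l) 0); auto. exfalso.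
    assert (nzc n v > 0)%nat; [|lia].
    clear - Hl n0. induction n; [lia|]. simpl. destruct (Nat.eq_dec l n) as [->|].
    + destruct (Req_EM_T (v n) 0); [contradiction|lia].
    + specialize (IHn ltac:(lia)). lia.
  - destruct (Classical_Prop.classic (exists l, (l < n)%nat /\ v l <> 0)) as [Ex|Nex].
    2:{ apply InQ_ext with (fun _ => 0); [|apply InQ_zero]. intros l Hl.
        destruct (Req_EM_T (v l) 0); auto. exfalso; apply Nex; exists l; auto. }
    assert (Hsink : exists l, (l < n)%nat /\ 0 < v l).
    { destruct (Classical_Prop.classic (exists l, (l < n)%nat /\ 0 < v l)) as [E|E]; auto.
      exfalso. destruct Ex as [l [Hl Hv]].
      assert (rsum n v < 0); [|lra].
      assert (Hall : forall k, (k < n)%nat -> v k <= 0).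
      { intros k Hk. destruct (Rle_dec (v k) 0); auto. exfalso; apply E; exists k; split; auto; lra. }
      assert (v l < 0) by (specialize (Hall l Hl); lra).
      apply Rle_lt_trans with (rsum n (fun k => if Nat.eqb k l then v l else 0)).
      - apply rsum_le. intros k Hk. destruct (Nat.eqb_spec k l); subst; [lra|]. auto.
      - rewrite (rsum_single n (fun k => if Nat.eqb k l then v l else 0) l Hl). cbv beta; rewrite Nat.eqb_refl; auto.
        intros k Hk Hne; destruct (Nat.eqb_spec k l); [contradiction|auto]. }
    destruct (argmax_ex n (fun l => 0 < v l) r) as [t [Ht [Hvt Htmax]]].
    { intros k; destruct (Rlt_dec 0 (v k)); auto. } { auto. }
    set (H := fun l => if Rlt_dec (r t) (r l) then true else false).
    set (U0 := fun l => (H l || Nat.eqb l t)%bool).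
    assert (HU0 : sumU n U0 v <= 0).
    { apply HU. intros i j Hi Hj Ui Hij. unfold U0, H in *.
      destruct (Rlt_dec (r t) (r j)); auto. exfalso.
      destruct (Rlt_dec (r t) (r i)); [lra|]. simpl in Ui. apply Nat.eqb_eq in Ui; subst. contradiction. }
    assert (HsumH : sumU n H v < 0).
    { assert (sumU n U0 v = sumU n H v + v t).
      { unfold sumU. rewrite <- (sumU_ind n (fun _ => true) (v t) t Ht). unfold sumU. rewrite <- rsum_plus.
        apply rsum_ext. intros k Hk. unfold U0, H. destruct (Nat.eqb_spec k t) as [->|]; simpl.
        - destruct (Rlt_dec (r t) (r t)); [lra|]. simpl. ring.
        - rewrite Bool.orb_false_r. destruct (Rlt_dec (r t) (r k)); ring. }
      lra. }
    destruct (rsum_neg_ex n _ HsumH) as [s [Hs Hvs]].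
    assert (Hsrc : H s = true /\ v s < 0) by (destruct (H s); [auto|lra]).
    destruct Hsrc as [Hs1 Hs2]. unfold H in Hs1. destruct (Rlt_dec (r t) (r s)) as [Hrst|]; [|discriminate].
    clear Hs1.
    set (d := Rmin (v t) (- v s)).
    assert (Hd0 : 0 < d) by (apply Rmin_glb_lt; lra).
    assert (Hd1 : d <= v t) by apply Rmin_l.
    assert (Hd2 : d <= - v s) by apply Rmin_r.
    set (e := fun l => (if Nat.eqb l t then 1 else 0) - (if Nat.eqb l s then 1 else 0)).
    set (v' := fun l => v l + (- d) * e l).
    assert (Hst : s <> t) by (intro; subst; lra).
    assert (Hsum_e : rsum n e = 0).
    { unfold e. rewrite rsum_minus. rewrite (rsum_single n _ t Ht), (rsum_single n _ s Hs).
      cbv beta. rewrite !Nat.eqb_refl. ring.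
      all: intros k Hk Hne; apply Nat.eqb_neq in Hne; rewrite Hne; auto. }
    assert (HsU : forall U, sumU n U e = (if U t then 1 else 0) - (if U s then 1 else 0)).
    { intros U. unfold e. rewrite <- (sumU_ind n U 1 t Ht), <- (sumU_ind n U 1 s Hs).
      unfold sumU. rewrite <- rsum_minus. apply rsum_ext. intros; destruct (U k); ring. }
    apply InQ_ext with (fun l => v' l + d * e l).
    { intros l Hl. unfold v'. ring. }
    apply InQ_plus.
    + apply IHN.
      * assert (nzc n v' < nzc n v)%nat; [|lia].
        apply nzc_lt.
        -- intros l Hl Hv'. unfold v', e in Hv'.
           destruct (Nat.eqb_spec l t) as [->|]; [lra|]. destruct (Nat.eqb_spec l s) as [->|]; [lra|].
           intro; apply Hv'; rewrite H0; ring.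
        -- unfold d in *. destruct (Rle_dec (v t) (- v s)).
           ++ exists t. split; auto. split; [lra|]. unfold v', e. rewrite Nat.eqb_refl.
              destruct (Nat.eqb_spec t s); [congruence|]. rewrite Rmin_left by lra. ring.
           ++ exists s. split; auto. split; [lra|]. unfold v', e. rewrite Nat.eqb_refl.
              destruct (Nat.eqb_spec s t); [congruence|]. rewrite Rmin_right by lra. ring.
      * unfold v'. rewrite rsum_plus, rsum_scal, Hsum_e, Hsum. ring.
      * intros U HUc. unfold v'. rewrite sumU_lin, HsU.
        specialize (HU U HUc) as HUv.
        destruct (U s) eqn:Us; destruct (U t) eqn:Ut; try lra.
        destruct (Classical_Prop.classic (exists l, (l < n)%nat /\ U l = true /\ r l <= r t)) as [[l0 [Hl0 [Ul0 Hrl0]]]|Nl].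
        -- set (V := fun l => (U l || Nat.eqb l t)%bool).
           assert (HV : sumU n V v <= 0).
           { apply HU. intros i j Hi Hj Vi Hij. unfold V in *.
             destruct (U i) eqn:Ui.
             - rewrite (HUc i j Hi Hj Ui Hij). auto.
             - simpl in Vi. apply Nat.eqb_eq in Vi. subst i.
               rewrite (HUc l0 j Hl0 Hj Ul0 ltac:(lra)). auto. }
           assert (sumU n V v = sumU n U v + v t).
           { unfold sumU. rewrite <- (sumU_ind n (fun _ => true) (v t) t Ht). unfold sumU. rewrite <- rsum_plus.
             apply rsum_ext. intros k Hk. unfold V. destruct (Nat.eqb_spec k t) as [->|]; simpl.
             - rewrite Ut. simpl. ring.
             - rewrite Bool.orb_false_r. destruct (U k); ring. }
           lra.
        -- assert (sumU n U v <= v s).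
           { unfold sumU. apply Rle_trans with (rsum n (fun k => if Nat.eqb k s then v s else 0)).
             - apply rsum_le. intros k Hk. destruct (Nat.eqb_spec k s) as [->|]. rewrite Us; lra.
               destruct (U k) eqn:Uk; [|lra].
               destruct (Rle_dec (v k) 0); auto. exfalso. apply Nl. exists k. split; auto. split; auto.
               apply Htmax; auto; lra.
             - rewrite (rsum_single n _ s Hs). cbv beta; rewrite Nat.eqb_refl; lra.
               intros k Hk Hne; destruct (Nat.eqb_spec k s); [contradiction|auto]. }
           lra.
    + apply InQ_gen; auto. lra.
Qed.
From Coquelicot Require Import Coquelicot.
Set Bullet Behavior "Strict Subproofs".

Definition hh a e u := (sqrt ((u-a)*(u-a) + e*e) + (u - a)) / 2.
Definition dh a e u := ((u-a) / sqrt((u-a)*(u-a)+e*e) + 1)/2.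
Lemma sq_pos a e u : 0 < e -> 0 < (u-a)*(u-a) + e*e.
Proof. intros He. apply Rplus_le_lt_0_compat. apply Rle_0_sqr. apply Rmult_lt_0_compat; auto. Qed.
Lemma hh_der a e u : 0 < e -> derivable_pt_lim (hh a e) u (dh a e u).
Proof.
  intros He. apply is_derive_Reals. unfold hh, dh. auto_derive.
  - apply (sq_pos a e u He).
  - replace (u + - a) with (u - a) by ring.
    assert (0 < sqrt ((u - a) * (u - a) + e * e)) by (apply sqrt_lt_R0; apply sq_pos; auto).
    field. lra.
Qed.

Lemma hh_convex a e u w : 0 < e -> dh a e u * (w - u) <= hh a e w - hh a e u.
Proof.
  intros He. unfold hh, dh.
  set (X := u - a). set (Y := w - a).
  assert (HA := sq_pos a e u He). assert (HB := sq_pos a e w He). fold X in HA. fold Y in HB.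
  set (A := sqrt (X*X + e*e)). set (B := sqrt (Y*Y+e*e)).
  assert (A2 : A * A = X*X+e*e) by (apply sqrt_sqrt; lra).
  assert (B2 : B * B = Y*Y+e*e) by (apply sqrt_sqrt; lra).
  assert (Ap : 0 < A) by (apply sqrt_lt_R0; lra).
  assert (Bp : 0 < B) by (apply sqrt_lt_R0; lra).
  replace (w - u) with (Y - X) by (unfold X, Y; ring).
  assert (Key : X*Y + e*e <= A*B).
  { destruct (Rle_dec (X*Y+e*e) 0). nra.
    assert ((X*Y+e*e)*(X*Y+e*e) <= (A*B)*(A*B)).
    { replace ((A*B)*(A*B)) with ((A*A)*(B*B)) by ring. rewrite A2, B2.
      assert (0 <= e*e*((X-Y)*(X-Y))) by (apply Rmult_le_pos; apply Rle_0_sqr). nra. }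
    set (Z := X*Y+e*e) in *. set (W := A*B) in *. assert (0 <= W) by (unfold W; nra).
    destruct (Rle_dec Z W); auto. exfalso.
    assert (W * W < Z * Z) by (apply Rmult_le_0_lt_compat; lra). lra. }
  assert (X / A * (Y - X) <= B - A).
  { unfold Rdiv. apply Rmult_le_reg_l with A; auto.
    replace (A * (X * / A * (Y - X))) with (X*(Y-X)) by (field; lra). nra. }
  lra.
Qed.

Lemma hh_bounds a e u : 0 < e -> 0 <= hh a e u - Rmax (u - a) 0 <= e / 2.
Proof.
  intros He. unfold hh. set (X := u - a).
  assert (HA := sq_pos a e u He). fold X in HA.
  set (A := sqrt (X*X+e*e)).
  assert (A2 : A * A = X*X+e*e) by (apply sqrt_sqrt; lra).
  assert (Ap : 0 <= A) by (apply sqrt_pos).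
  assert (H1 : Rabs X <= A).
  { apply Rsqr_incr_0_var. unfold Rsqr. rewrite A2. rewrite <- Rabs_mult, Rabs_right. nra.
    apply Rle_ge, Rle_0_sqr. auto. }
  assert (H2 : A <= Rabs X + e).
  { apply Rsqr_incr_0_var. unfold Rsqr. rewrite A2.
    assert (Rabs X * Rabs X = X * X) by (rewrite <- Rabs_mult, Rabs_right; auto; apply Rle_ge, Rle_0_sqr).
    pose proof (Rabs_pos X). nra. pose proof (Rabs_pos X). lra. }
  unfold Rmax. destruct (Rle_dec (X) 0).
  - rewrite Rabs_left1 in H1, H2 by auto. lra.
  - rewrite Rabs_right in H1, H2 by lra. lra.
Qed.

Lemma Rmax_scal c w : 0 < c -> Rmax (c * w) 0 = c * Rmax w 0.
Proof. intros Hc. unfold Rmax. destruct (Rle_dec (c*w) 0); destruct (Rle_dec w 0); try nra. Qed.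

Lemma rsum_der n (f : R -> nat -> R) (d : nat -> R) t :
  (forall l, (l < n)%nat -> derivable_pt_lim (fun s => f s l) t (d l)) ->
  derivable_pt_lim (fun s => rsum n (f s)) t (rsum n d).
Proof.
  induction n; intros H; simpl.
  - apply derivable_pt_lim_const.
  - apply (derivable_pt_lim_plus (fun s => rsum n (f s)) (fun s => f s n)).
    apply IHn; intros; apply H; lia. apply H; lia.
Qed.

Lemma dissip n Ps q (x : nat -> R) (phi dphi : R -> R) :
  (forall l, (l < n)%nat -> 0 < Ps l) ->
  markov_chain n Ps q -> (forall u w, dphi u * (w - u) <= phi w - phi u) ->
  rsum n (fun l => dphi (x l) * kolmogorov_rhs n q (fun j => Ps j * x j) l) <= 0.
Proof.
  intros HPs [Hq Hbal] Hconv.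
  assert (Step1 : forall l, (l < n)%nat -> kolmogorov_rhs n q (fun j => Ps j * x j) l
                    = rsum_ne n l (fun j => q l j * Ps j * (x j - x l))).
  { intros l Hl. unfold kolmogorov_rhs. rewrite rsum_ne_minus.
    replace (fun j => q l j * Ps j * (x j - x l)) with (fun j => q l j * Ps j * x j - x l * (q l j * Ps j))
      by (apply FunctionalExtensionality.functional_extensionality; intros; ring).
    rewrite rsum_ne_minus, rsum_ne_scal, Hbal by auto.
    replace (fun j => q j l * (Ps l * x l)) with (fun j => (Ps l * x l) * q j l)
      by (apply FunctionalExtensionality.functional_extensionality; intros; ring).
    rewrite rsum_ne_scal.
    replace (fun j => q l j * (Ps j * x j)) with (fun j => q l j * Ps j * x j)
      by (apply FunctionalExtensionality.functional_extensionality; intros; ring).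
    ring. }
  apply Rle_trans with (rsum n (fun l => rsum_ne n l (fun j => q l j * Ps j * (phi (x j) - phi (x l))))).
  - apply rsum_le. intros l Hl. rewrite Step1 by auto. rewrite <- rsum_ne_scal.
    apply rsum_ne_le. intros j Hj Hjl.
    assert (0 <= q l j * Ps j).
    { apply Rmult_le_pos. apply Hq; auto. 
      left; auto. }
    specialize (Hconv (x l) (x j)). 
    replace (dphi (x l) * (q l j * Ps j * (x j - x l))) with ((q l j * Ps j) * (dphi (x l) * (x j - x l))) by ring.
    replace (q l j * Ps j * (phi (x j) - phi (x l))) with ((q l j * Ps j) * (phi (x j) - phi (x l))) by ring.
    apply Rmult_le_compat_l; auto.
  - right.
    assert (E1 : forall l, (l < n)%nat -> rsum_ne n l (fun j => q l j * Ps j * (phi (x j) - phi (x l)))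
       = rsum_ne n l (fun j => q l j * Ps j * phi (x j)) - phi (x l) * Ps l * rsum_ne n l (fun j => q j l)).
    { intros l Hl.
      replace (fun j => q l j * Ps j * (phi (x j) - phi (x l))) with
        (fun j => q l j * Ps j * phi (x j) - phi (x l) * (q l j * Ps j))
        by (apply FunctionalExtensionality.functional_extensionality; intros; ring).
      rewrite rsum_ne_minus, rsum_ne_scal, Hbal by auto. ring. }
    rewrite (rsum_ext n _ _ E1). rewrite rsum_minus.
    rewrite (rsum_ne_swap n (fun l j => q l j * Ps j * phi (x j))).
    assert (E2 : forall j, (j < n)%nat -> rsum_ne n j (fun l => q l j * Ps j * phi (x j))
        = phi (x j) * Ps j * rsum_ne n j (fun l => q l j)).
    { intros j Hj. rewrite <- rsum_ne_scal. apply rsum_ne_ext. intros; ring. }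
    rewrite (rsum_ext n _ _ E2). ring.
Qed.

Lemma der_scal c g t d : derivable_pt_lim g t d -> derivable_pt_lim (fun s => c * g s) t (c * d).
Proof. intros H. exact (derivable_pt_lim_scal g c t d H). Qed.

Lemma der_ext f g t d : (forall s, f s = g s) -> derivable_pt_lim f t d -> derivable_pt_lim g t d.
Proof. intros E H. replace g with f; auto. apply FunctionalExtensionality.functional_extensionality; auto. Qed.

Lemma der_val f t d d' : d = d' -> derivable_pt_lim f t d -> derivable_pt_lim f t d'.
Proof. intros ->; auto. Qed.

Definition Fa n (Ps : nat -> R) a (x : nat -> R) := rsum n (fun l => Rmax (x l - a * Ps l) 0).
Definition Gf n (Ps : nat -> R) a e (x : nat -> R) := rsum n (fun l => Ps l * hh a e (x l / Ps l)).

Lemma FG_bounds n Ps a e x : (forall l, (l < n)%nat -> 0 < Ps l) -> 0 < e ->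
  Fa n Ps a x <= Gf n Ps a e x <= Fa n Ps a x + e / 2 * rsum n Ps.
Proof.
  intros HPs He. unfold Fa, Gf. split.
  - apply rsum_le. intros l Hl. specialize (HPs l Hl).
    replace (x l - a * Ps l) with (Ps l * (x l / Ps l - a)) by (field; lra).
    rewrite Rmax_scal by auto. pose proof (hh_bounds a e (x l / Ps l) He). nra.
  - rewrite <- rsum_scal, <- rsum_plus. apply rsum_le. intros l Hl. specialize (HPs l Hl).
    replace (x l - a * Ps l) with (Ps l * (x l / Ps l - a)) by (field; lra).
    rewrite Rmax_scal by auto. pose proof (hh_bounds a e (x l / Ps l) He). nra.
Qed.

Lemma pre_F n Ps x y : (forall l, (l < n)%nat -> 0 < Ps l) -> rsum n Ps = 1 ->
  markov_pre n Ps x y -> forall a, Fa n Ps a y <= Fa n Ps a x.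
Proof.
  intros HPs HPs1 [q [Hmc [P [Hsol [H0 H1]]]]] a.
  assert (Ey : Fa n Ps a y = Fa n Ps a (P 1)) by (unfold Fa; apply rsum_ext; intros l Hl; rewrite H1; auto).
  assert (Ex : Fa n Ps a x = Fa n Ps a (P 0)) by (unfold Fa; apply rsum_ext; intros l Hl; rewrite H0; auto).
  rewrite Ey, Ex.
  assert (Main : forall e, 0 < e -> Gf n Ps a e (P 1) <= Gf n Ps a e (P 0)).
  { intros e He.
    set (G := fun t => Gf n Ps a e (P t)).
    set (dG := fun t => rsum n (fun l => Ps l * (dh a e (P t l / Ps l) * (kolmogorov_rhs n q (P t) l / Ps l)))).
    assert (Hd : forall t, derivable_pt_lim G t (dG t)).
    { intros t. unfold G, dG, Gf. apply (rsum_der n (fun s l => Ps l * hh a e (P s l / Ps l))).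
      intros l Hl. apply der_scal.
      apply (derivable_pt_lim_comp (fun s => P s l / Ps l) (hh a e)).
      - apply (der_ext (fun s => / Ps l * P s l)). intros; unfold Rdiv; ring.
        apply der_val with (/ Ps l * kolmogorov_rhs n q (P t) l). unfold Rdiv; ring.
        apply der_scal. apply Hsol; auto.
      - apply hh_der; auto. }
    assert (Hneg : forall t, dG t <= 0).
    { intros t. unfold dG.
      apply Rle_trans with (rsum n (fun l => dh a e (P t l / Ps l) *
            kolmogorov_rhs n q (fun j => Ps j * (P t j / Ps j)) l)).
      - right. apply rsum_ext. intros l Hl.
        replace (kolmogorov_rhs n q (fun j => Ps j * (P t j / Ps j)) l) with (kolmogorov_rhs n q (P t) l).
        field. specialize (HPs l Hl); lra.
        unfold kolmogorov_rhs. apply rsum_ne_ext. intros j Hj Hjl.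
        assert (0 < Ps j) by auto. assert (0 < Ps l) by auto. field. lra.
      - apply (dissip n Ps q (fun l => P t l / Ps l) (hh a e) (dh a e)); auto.
        intros; apply hh_convex; auto. }
    pose (pr := fun t => exist (fun d => derivable_pt_lim G t d) (dG t) (Hd t) : derivable_pt G t).
    destruct (MVT_cor1 G 0 1 pr ltac:(lra)) as [c [Hc _]].
    unfold derive_pt, pr in Hc. simpl in Hc. specialize (Hneg c). unfold G in Hc. nra. }
  destruct (Rle_dec (Fa n Ps a (P 1)) (Fa n Ps a (P 0))) as [|Hn]; auto. exfalso.
  set (e := Fa n Ps a (P 1) - Fa n Ps a (P 0)).
  assert (He : 0 < e) by (unfold e; lra).
  pose proof (FG_bounds n Ps a e (P 1) HPs He). pose proof (FG_bounds n Ps a e (P 0) HPs He).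
  pose proof (Main e He). rewrite HPs1 in *. unfold e in *. lra.
Qed.

Lemma Rmax_lip u w : Rabs (Rmax u 0 - Rmax w 0) <= Rabs (u - w).
Proof. unfold Rmax. destruct (Rle_dec u 0); destruct (Rle_dec w 0); unfold Rabs;
  repeat destruct Rcase_abs; lra. Qed.

Lemma cv_rmax u l : Un_cv u l -> Un_cv (fun k => Rmax (u k) 0) (Rmax l 0).
Proof.
  intros H eps Heps. destruct (H eps Heps) as [N HN]. exists N. intros k Hk.
  unfold R_dist in *. eapply Rle_lt_trans. apply Rmax_lip. apply HN; auto.
Qed.

Lemma cv_const c : Un_cv (fun _ => c) c.
Proof. intros eps Heps. exists 0%nat. intros. unfold R_dist. rewrite Rminus_diag, Rabs_R0. auto. Qed.

Lemma cv_rsum n (f : nat -> nat -> R) (g : nat -> R) :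
  (forall i, (i < n)%nat -> Un_cv (fun k => f k i) (g i)) -> Un_cv (fun k => rsum n (f k)) (rsum n g).
Proof.
  induction n; intros H; simpl. apply cv_const.
  apply (CV_plus (fun k => rsum n (f k)) (fun k => f k n)). apply IHn; intros; apply H; lia. apply H; lia.
Qed.

Lemma Fa_cv n Ps a xs x : vconv n xs x -> Un_cv (fun k => Fa n Ps a (xs k)) (Fa n Ps a x).
Proof.
  intros H. unfold Fa. apply (cv_rsum n (fun k l => Rmax (xs k l - a * Ps l) 0)).
  intros i Hi. apply (cv_rmax (fun k => xs k i - a * Ps i)).
  apply (CV_minus (fun k => xs k i) (fun _ => a * Ps i)). apply H; auto. apply cv_const.
Qed.

Definition RlF n Ps (x y : nat -> R) := forall a, Fa n Ps a y <= Fa n Ps a x.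

Lemma RlF_closed n Ps : rel_closed n (RlF n Ps).
Proof.
  intros xs ys x y H Hx Hy _ _ a.
  apply (Rle_cv_lim (Un := fun k => Fa n Ps a (ys k)) (Vn := fun k => Fa n Ps a (xs k))).
  - intros k; apply H.
  - apply Fa_cv; auto.
  - apply Fa_cv; auto.
Qed.

Lemma RlF_trans n Ps : rel_trans (RlF n Ps).
Proof. intros x y z H1 H2 a. specialize (H1 a); specialize (H2 a). lra. Qed.

Lemma sumU_from_F n Ps P0 P1 :
  (forall l, (l < n)%nat -> 0 < Ps l) -> RlF n Ps P0 P1 ->
  forall U, upclosed n (fun l => P0 l / Ps l) U -> sumU n U (fun l => P1 l - P0 l) <= 0.
Proof.
  intros HPs HR U HU. set (r := fun l => P0 l / Ps l) in *.
  destruct (Classical_Prop.classic (exists l, (l < n)%nat /\ U l = true)) as [Ex|Nex].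
  - destruct (argmin_ex n (fun l => U l = true) r) as [i0 [Hi0 [Ui0 Hmin]]].
    { intros k; destruct (U k); auto. } { auto. }
    set (a := r i0). specialize (HR a).
    assert (E0 : Fa n Ps a P0 = sumU n U (fun l => P0 l - a * Ps l)).
    { unfold Fa, sumU. apply rsum_ext. intros l Hl. assert (Hp := HPs l Hl).
      assert (P0 l = Ps l * r l) by (unfold r; field; lra).
      destruct (U l) eqn:Ul.
      - apply Rmax_left. specialize (Hmin l Hl Ul). fold a in Hmin. nra.
      - apply Rmax_right. destruct (Rle_dec (r l) a). nra. exfalso.
        assert (U l = true) by (apply (HU i0 l); auto; fold a; lra). congruence. }
    assert (E1 : sumU n U (fun l => P1 l - a * Ps l) <= Fa n Ps a P1).
    { unfold Fa, sumU. apply rsum_le. intros l Hl. destruct (U l). apply Rmax_l. apply Rmax_r. }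
    assert (E2 : sumU n U (fun l => P1 l - P0 l) = sumU n U (fun l => P1 l - a * Ps l) - sumU n U (fun l => P0 l - a * Ps l)).
    { unfold sumU. rewrite <- rsum_minus. apply rsum_ext. intros; destruct (U k); ring. }
    lra.
  - right. unfold sumU. apply rsum_zero. intros l Hl. destruct (U l) eqn:Ul; auto.
    exfalso; apply Nex; exists l; auto.
Qed.

Lemma dir_back n Ps k m M P0 :
  simplex_pos n Ps -> simplex_pos n P0 ->
  (forall P, in_P0_plus_Q n Ps P0 P -> inL n k m M P -> veq n P P0) ->
  forall P1, simplex_pos n P1 -> inL n k m M P1 -> markov_order n Ps P0 P1 -> veq n P1 P0.
Proof.
  intros [HPs HPs1] [HP0 HP01] HQ P1 [HP1 HP11] HL1 HMO.
  assert (HR : RlF n Ps P0 P1).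
  { apply HMO. apply RlF_closed. apply RlF_trans. intros x y _ Hp a. apply (pre_F n Ps x y); auto. }
  apply HQ; auto.
  assert (HI : InQ n (fun l => P0 l / Ps l) (fun l => P1 l - P0 l)).
  { apply (flow_lemma n _ (nzc n (fun l => P1 l - P0 l))); auto.
    - rewrite rsum_minus, HP11, HP01. ring.
    - apply sumU_from_F; auto. }
  destruct HI as [c [Hc Hv]]. exists c. split; auto.
  intros l Hl. rewrite <- (Hv l Hl). ring.
Qed.

Ltac eqbs := repeat match goal with
  | |- context [Nat.eqb ?x ?y] => destruct (Nat.eqb_spec x y)
  end; simpl; subst; try congruence; try lra; try ring.

Lemma gt_der D s kap t : 0 < s ->
  derivable_pt_lim (fun u => D / s * (1 - exp (- (kap * s) * u))) t (kap * D * exp (- (kap * s) * t)).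
Proof. intros Hs. apply is_derive_Reals. auto_derive; auto. field. lra. Qed.

Lemma step_pre n Ps y a b kap : (forall l, (l < n)%nat -> 0 < Ps l) -> (a < n)%nat -> (b < n)%nat -> a <> b -> 0 <= kap ->
  forall z, veq n z (fun l => y l
     + (if Nat.eqb l a then (Ps a * y b - Ps b * y a) / (Ps a + Ps b) * (1 - exp (- (kap * (Ps a + Ps b)) * 1)) else 0)
     - (if Nat.eqb l b then (Ps a * y b - Ps b * y a) / (Ps a + Ps b) * (1 - exp (- (kap * (Ps a + Ps b)) * 1)) else 0)) ->
  markov_pre n Ps y z.
Proof.
  intros HPs Ha Hb Hab Hk z Hz.
  set (s := Ps a + Ps b) in *. set (D := Ps a * y b - Ps b * y a) in *.
  assert (Hs : 0 < s) by (unfold s; pose proof (HPs a Ha); pose proof (HPs b Hb); lra).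
  set (gt := fun u => D / s * (1 - exp (- (kap * s) * u))).
  set (q := fun i j => if (Nat.eqb i a && Nat.eqb j b)%bool then kap * Ps a
                       else if (Nat.eqb i b && Nat.eqb j a)%bool then kap * Ps b else 0).
  set (P := fun u l => y l + (if Nat.eqb l a then gt u else 0) - (if Nat.eqb l b then gt u else 0)).
  assert (Pa := HPs a Ha). assert (Pb := HPs b Hb).
  exists q. split; [split|].
  - intros i j Hi Hj Hij. unfold q. eqbs; nra.
  - intros i Hi. destruct (Nat.eq_dec i a) as [->|Hia]; [|destruct (Nat.eq_dec i b) as [->|Hib]].
    + rewrite (rsum_ne_single n a _ b Hb ltac:(auto)).
      rewrite (rsum_ne_single n a _ b Hb ltac:(auto)).
      unfold q. eqbs.
      all: intros j Hj H1 H2; unfold q; eqbs.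
    + rewrite (rsum_ne_single n b _ a Ha ltac:(auto)).
      rewrite (rsum_ne_single n b _ a Ha ltac:(auto)).
      unfold q. eqbs.
      all: intros j Hj H1 H2; unfold q; eqbs.
    + rewrite !rsum_ne_zero. ring.
      all: intros j Hj H1; unfold q; eqbs.
  - exists P. split; [|split].
    + intros i t Hi. unfold kolmogorov_rhs.
      destruct (Nat.eq_dec i a) as [->|Hia]; [|destruct (Nat.eq_dec i b) as [->|Hib]].
      * rewrite (rsum_ne_single n a _ b Hb ltac:(auto)).
        2:{ intros j Hj H1 H2; unfold q; eqbs. }
        apply (der_ext (fun u => y a + gt u)). { intros; unfold P; eqbs. }
        apply der_val with (0 + kap * D * exp (- (kap * s) * t)).
        { unfold q, P, gt. eqbs. unfold D, s. field. lra. }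
        apply derivable_pt_lim_plus. apply derivable_pt_lim_const. apply gt_der; auto.
      * rewrite (rsum_ne_single n b _ a Ha ltac:(auto)).
        2:{ intros j Hj H1 H2; unfold q; eqbs. }
        apply (der_ext (fun u => y b + - gt u)). { intros; unfold P; eqbs. }
        apply der_val with (0 + - (kap * D * exp (- (kap * s) * t))).
        { unfold q, P, gt. eqbs. unfold D, s. field. lra. }
        apply derivable_pt_lim_plus. apply derivable_pt_lim_const. apply derivable_pt_lim_opp. apply gt_der; auto.
      * rewrite rsum_ne_zero. 2:{ intros j Hj H1; unfold q; eqbs. }
        apply (der_ext (fun u => y i)). { intros; unfold P; eqbs. }
        apply derivable_pt_lim_const.
    + intros l Hl. unfold P, gt. rewrite Rmult_0_r, exp_0. eqbs.
    + intros l Hl. rewrite Hz by auto. unfold P, gt. reflexivity.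
Qed.

Lemma MO_trans n Ps x y z : markov_order n Ps x y -> markov_order n Ps y z -> markov_order n Ps x z.
Proof. intros H1 H2 Rl Hc Ht Hp. apply (Ht x y z); [apply H1|apply H2]; auto. Qed.

Lemma MO_pre n Ps x y : simplex_pos n x -> markov_pre n Ps x y -> markov_order n Ps x y.
Proof. intros Hx Hp Rl Hc Ht Hpre. apply Hpre; auto. Qed.

Lemma MO_ext n Ps x y y' : markov_order n Ps x y -> (forall l, y l = y' l) -> markov_order n Ps x y'.
Proof. intros H E. replace y' with y; auto. apply FunctionalExtensionality.functional_extensionality; auto. Qed.

Lemma MO_refl n Ps y : (2 <= n)%nat -> (forall l, (l < n)%nat -> 0 < Ps l) -> simplex_pos n y -> markov_order n Ps y y.
Proof.
  intros Hn HPs Hy. apply MO_pre; auto.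
  apply (step_pre n Ps y 0 1 0 HPs ltac:(lia) ltac:(lia) ltac:(lia) ltac:(lra)).
  intros l Hl. rewrite Rmult_0_l, Ropp_0, Rmult_0_l, exp_0. destruct (Nat.eqb l 0); destruct (Nat.eqb l 1); ring.
Qed.

Lemma step_MO n Ps y a b d : (forall l, (l < n)%nat -> 0 < Ps l) -> simplex_pos n y ->
  (a < n)%nat -> (b < n)%nat -> a <> b -> 0 <= d -> d * (Ps a + Ps b) < Ps a * y b - Ps b * y a ->
  markov_order n Ps y (fun l => y l + (if Nat.eqb l a then d else 0) - (if Nat.eqb l b then d else 0)).
Proof.
  intros HPs Hy Ha Hb Hab Hd Hlt. apply MO_pre; auto.
  set (s := Ps a + Ps b) in *. set (D := Ps a * y b - Ps b * y a) in *.
  assert (Hs : 0 < s) by (unfold s; pose proof (HPs a Ha); pose proof (HPs b Hb); lra).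
  assert (HD : 0 < D) by nra.
  assert (Hz : 0 < 1 - d * s / D).
  { apply Rlt_Rminus. apply (Rmult_lt_reg_r D); auto. unfold Rdiv. rewrite Rmult_assoc, Rinv_l by lra. lra. }
  assert (Hz1 : 1 - d * s / D <= 1).
  { assert (0 <= d * s / D) by (apply Rmult_le_pos; [nra| left; apply Rinv_0_lt_compat; auto]). lra. }
  set (kap := - ln (1 - d * s / D) / s).
  assert (Hk : 0 <= kap).
  { unfold kap. assert (ln (1 - d * s / D) <= 0) by (rewrite <- ln_1; apply ln_le; auto).
    unfold Rdiv. apply Rmult_le_pos. lra. left; apply Rinv_0_lt_compat; auto. }
  apply (step_pre n Ps y a b kap HPs Ha Hb Hab Hk).
  assert (Eg : D / s * (1 - exp (- (kap * s) * 1)) = d).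
  { replace (- (kap * s) * 1) with (ln (1 - d * s / D)) by (unfold kap; field; lra).
    rewrite exp_ln by auto. field. split; lra. }
  fold s D. rewrite Eg. intros l Hl. reflexivity.
Qed.

Lemma lowbound2 n (P : nat -> nat -> Prop) (g : nat -> nat -> R) :
  (forall a b, (a < n)%nat -> (b < n)%nat -> P a b -> 0 < g a b) ->
  exists m, 0 < m /\ forall a b, (a < n)%nat -> (b < n)%nat -> P a b -> m <= g a b.
Proof.
  intros H.
  assert (Gen : forall N, (N <= n)%nat -> exists m, 0 < m /\ forall a b, (a < N)%nat -> (b < n)%nat -> P a b -> m <= g a b).
  { induction N; intros HN.
    - exists 1; split; [lra|]; intros; lia.
    - destruct (IHN ltac:(lia)) as [m [Hm Hb]].
      destruct (lowbound n (P N) (g N)) as [m' [Hm' Hb']]. { intros; apply H; auto; lia. }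
      exists (Rmin m m'). split. { apply Rmin_glb_lt; auto. }
      intros a b Ha Hb2 HP. destruct (Nat.eq_dec a N) as [->|].
      + apply Rle_trans with m'. apply Rmin_r. apply Hb'; auto.
      + apply Rle_trans with m. apply Rmin_l. apply Hb; auto; lia. }
  apply Gen; lia.
Qed.

Lemma rsum_abs_le n f g : (forall k, (k < n)%nat -> Rabs (f k) <= g k) -> Rabs (rsum n f) <= rsum n g.
Proof.
  induction n; intros H; simpl. rewrite Rabs_R0; lra.
  eapply Rle_trans. apply Rabs_triang. apply Rplus_le_compat. apply IHn; intros; apply H; lia. apply H; lia.
Qed.

Lemma sgn_abs x : Rabs (sgn x) <= 1.
Proof. unfold sgn. destruct (Rlt_dec 0 x); [|destruct (Rlt_dec x 0)]; unfold Rabs; destruct Rcase_abs; lra. Qed.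

Lemma gamma_abs j i l : Rabs (gamma j i l) <= 1.
Proof. unfold gamma. destruct (Nat.eqb l i); destruct (Nat.eqb l j); unfold Rabs; destruct Rcase_abs; lra. Qed.

Lemma term_abs c x g : 0 <= c -> Rabs x <= 1 -> Rabs g <= 1 -> Rabs (c * x * g) <= c.
Proof.
  intros Hc Hx Hg. rewrite !Rabs_mult, (Rabs_right c) by lra.
  assert (0 <= Rabs x) by apply Rabs_pos. assert (0 <= Rabs g) by apply Rabs_pos.
  assert (Rabs x * Rabs g <= 1) by nra. nra.
Qed.

Lemma gamma_sum n j i : (j < n)%nat -> (i < n)%nat -> rsum n (gamma j i) = 0.
Proof.
  intros Hj Hi. unfold gamma. rewrite rsum_minus.
  rewrite (rsum_single n _ i Hi), (rsum_single n (fun l => if Nat.eqb l j then 1 else 0) j Hj).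
  cbv beta. rewrite !Nat.eqb_refl. ring.
  all: intros k Hk Hne; apply Nat.eqb_neq in Hne; rewrite Hne; auto.
Qed.

Lemma abs_between x B : Rabs x <= B -> - B <= x <= B.
Proof. unfold Rabs; destruct Rcase_abs; intros; lra. Qed.

Lemma dir_fwd n Ps k m M P0 :
  (2 <= n)%nat -> simplex_pos n Ps -> simplex_pos n P0 -> inL n k m M P0 ->
  (forall P1, simplex_pos n P1 -> inL n k m M P1 -> markov_order n Ps P0 P1 -> veq n P1 P0) ->
  forall P, in_P0_plus_Q n Ps P0 P -> inL n k m M P -> veq n P P0.
Proof.
  intros Hn [HPs HPs1] [HP0 HP01] HL0 Hmin P [c [Hc HP]] HL.
  set (T := fun j i l => c j i * sgn (P0 j / Ps j - P0 i / Ps i) * gamma j i l) in *.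
  set (W := fun i l => rsum i (fun i' => rsum i' (fun j => T j i' l))) in *.
  set (V := fun i J l => W i l + rsum J (fun j => T j i l)).
  set (Cw := fun i => rsum i (fun i' => rsum i' (fun j => c j i'))).
  set (C := Cw n).
  assert (Tabs : forall j i l, (j < i)%nat -> (i < n)%nat -> Rabs (T j i l) <= c j i).
  { intros j i l H1 H2. unfold T. apply term_abs. apply Hc; auto. apply sgn_abs. apply gamma_abs. }
  assert (Wabs : forall i l, (i <= n)%nat -> Rabs (W i l) <= Cw i).
  { intros i l Hi. unfold W, Cw. apply rsum_abs_le. intros i' Hi'. apply rsum_abs_le. intros j Hj. apply Tabs; lia. }
  assert (Vabs : forall i J l, (i < n)%nat -> (J <= i)%nat -> Rabs (V i J l) <= Cw i + rsum J (fun j => c j i)).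
  { intros i J l Hi HJ. unfold V. eapply Rle_trans. apply Rabs_triang. apply Rplus_le_compat.
    apply Wabs; lia. apply rsum_abs_le. intros j Hj. apply Tabs; lia. }
  assert (Cwmono : forall i, (i <= n)%nat -> Cw i <= C).
  { intros i Hi. unfold C, Cw. apply rsum_mono_range; auto. intros i' Hi'. apply rsum_nonneg. intros; apply Hc; lia. }
  assert (Cbound : forall i J, (i < n)%nat -> (J <= i)%nat -> Cw i + rsum J (fun j => c j i) <= C).
  { intros i J Hi HJ. apply Rle_trans with (Cw (S i)); [|apply Cwmono; lia].
    unfold Cw at 2. simpl. fold (Cw i). apply Rplus_le_compat_l. apply rsum_mono_range; auto.
    intros; apply Hc; lia. }
  assert (HC0 : 0 <= C) by (unfold C, Cw; apply rsum_nonneg; intros; apply rsum_nonneg; intros; apply Hc; lia).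
  assert (Tsum : forall j i, (j < n)%nat -> (i < n)%nat -> rsum n (fun l => T j i l) = 0).
  { intros j i Hj Hi. unfold T. rewrite rsum_scal. rewrite gamma_sum; auto; ring. }
  assert (Wsum : forall i, (i <= n)%nat -> rsum n (fun l => W i l) = 0).
  { intros i Hi. unfold W. rewrite rsum_fubini. apply rsum_zero. intros i' Hi'.
    rewrite rsum_fubini. apply rsum_zero. intros j Hj. apply Tsum; lia. }
  assert (Vsum : forall i J, (i < n)%nat -> (J <= i)%nat -> rsum n (fun l => V i J l) = 0).
  { intros i J Hi HJ. unfold V. rewrite rsum_plus, Wsum by lia. rewrite rsum_fubini.
    rewrite rsum_zero. ring. intros j Hj. apply Tsum; lia. }
  destruct (lowbound n (fun _ => True) P0) as [pm [Hpm Hpmb]]. { intros; auto. }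
  destruct (lowbound2 n (fun a b => 0 < Ps a * P0 b - Ps b * P0 a)
              (fun a b => (Ps a * P0 b - Ps b * P0 a) / (Ps a + Ps b))) as [Dl [HDl HDlb]].
  { intros a b Ha Hb Hab. assert (0 < Ps a) by auto. assert (0 < Ps b) by auto.
    unfold Rdiv. apply Rmult_lt_0_compat; auto. apply Rinv_0_lt_compat; lra. }
  set (eps := Rmin Dl pm / (C + 1) / 2).
  assert (Hmin0 : 0 < Rmin Dl pm) by (apply Rmin_glb_lt; auto).
  assert (Heps : 0 < eps) by (unfold eps; unfold Rdiv; repeat apply Rmult_lt_0_compat; auto; apply Rinv_0_lt_compat; lra).
  assert (HepsC : eps * C < Rmin Dl pm).
  { unfold eps. apply Rle_lt_trans with (Rmin Dl pm / 2).
    - unfold Rdiv. replace (Rmin Dl pm * / (C + 1) * / 2 * C) with (Rmin Dl pm * / 2 * (C / (C + 1))) by (field; lra).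
      rewrite <- (Rmult_1_r (Rmin Dl pm * / 2)) at 2. apply Rmult_le_compat_l. lra.
      unfold Rdiv. apply (Rmult_le_reg_r (C + 1)); [lra|]. rewrite Rmult_assoc, Rinv_l by lra. lra.
    - lra. }
  assert (HeD : eps * C < Dl) by (pose proof (Rmin_l Dl pm); lra).
  assert (Hep : eps * C < pm) by (pose proof (Rmin_r Dl pm); lra).
  set (y := fun i J l => P0 l + eps * V i J l).
  assert (Ysimp : forall i J, (i < n)%nat -> (J <= i)%nat -> simplex_pos n (y i J)).
  { intros i J Hi HJ. split.
    - intros l Hl. unfold y. pose proof (abs_between _ _ (Vabs i J l Hi HJ)). pose proof (Cbound i J Hi HJ).
      pose proof (Hpmb l Hl I). nra.
    - unfold y. rewrite rsum_plus, rsum_scal, Vsum, HP01 by auto. ring. }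
  assert (Step : forall i J, (i < n)%nat -> (J < i)%nat -> markov_order n Ps (y i J) (y i (S J))).
  { intros i J Hi HJ.
    assert (YS := Ysimp i J Hi ltac:(lia)).
    set (B := Cw i + rsum J (fun j => c j i)).
    assert (HB : B + c J i <= C) by (pose proof (Cbound i (S J) Hi HJ) as HH; simpl in HH; unfold B; lra).
    assert (HcJ : 0 <= c J i) by (apply Hc; lia).
    assert (Vb : forall l, - B <= V i J l <= B) by (intros; apply abs_between; apply Vabs; lia).
    assert (PJ := HPs J ltac:(lia)). assert (Pi := HPs i Hi).
    assert (Cond : forall a b, (a < n)%nat -> (b < n)%nat -> 0 < Ps a * P0 b - Ps b * P0 a ->
              eps * c J i * (Ps a + Ps b) < Ps a * y i J b - Ps b * y i J a).
    { intros a b Ha Hb HD. specialize (HDlb a b Ha Hb HD). cbv beta in HDlb.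
      assert (Pa := HPs a Ha). assert (Pb := HPs b Hb).
      assert (Dl * (Ps a + Ps b) <= Ps a * P0 b - Ps b * P0 a).
      { apply (Rmult_le_reg_r (/ (Ps a + Ps b))). apply Rinv_0_lt_compat; lra.
        rewrite Rmult_assoc, Rinv_r by lra. lra. }
      unfold y. pose proof (Vb a). pose proof (Vb b).
      assert (eps * (B + c J i) < Dl) by nra.
      assert (Ps a * V i J b - Ps b * V i J a >= - (Ps a + Ps b) * B) by nra.
      nra. }
    assert (EqS : forall l, y i (S J) l = y i J l + eps * T J i l).
    { intros l. unfold y, V. simpl. ring. }
    unfold T in EqS.
    destruct (Rlt_dec 0 (P0 J / Ps J - P0 i / Ps i)) as [Hpos|Hnpos].
    - rewrite sgn_pos in EqS by auto.
      assert (HD : 0 < Ps i * P0 J - Ps J * P0 i).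
      { replace (Ps i * P0 J - Ps J * P0 i) with (Ps i * Ps J * (P0 J / Ps J - P0 i / Ps i)) by (field; lra).
        apply Rmult_lt_0_compat; auto. nra. }
      eapply MO_ext. apply (step_MO n Ps (y i J) i J (eps * c J i)); auto; try lia.
      nra. apply Cond; auto; lia.
      intros l. rewrite EqS. unfold gamma. destruct (Nat.eqb l i); destruct (Nat.eqb l J); ring.
    - destruct (Rlt_dec (P0 J / Ps J - P0 i / Ps i) 0) as [Hneg|Hz].
      + rewrite sgn_neg in EqS by auto.
        assert (HD : 0 < Ps J * P0 i - Ps i * P0 J).
        { replace (Ps J * P0 i - Ps i * P0 J) with (Ps i * Ps J * (P0 i / Ps i - P0 J / Ps J)) by (field; lra).
          apply Rmult_lt_0_compat; [nra|lra]. }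
        eapply MO_ext. apply (step_MO n Ps (y i J) J i (eps * c J i)); auto; try lia.
        nra. apply Cond; auto; lia.
        intros l. rewrite EqS. unfold gamma. destruct (Nat.eqb l i); destruct (Nat.eqb l J); ring.
      + assert (Hs0 : sgn (P0 J / Ps J - P0 i / Ps i) = 0).
        { unfold sgn. destruct (Rlt_dec 0 _); [contradiction|]. destruct (Rlt_dec _ 0); [contradiction|auto]. }
        rewrite Hs0 in EqS. eapply MO_ext. apply MO_refl; auto.
        intros l. rewrite EqS. ring. }
  assert (Outer : forall i, (i <= n)%nat -> markov_order n Ps P0 (fun l => P0 l + eps * W i l)).
  { induction i; intros Hi.
    - eapply MO_ext. apply MO_refl; auto. split; auto. intros l. unfold W. simpl. ring.
    - assert (Inner : forall J, (J <= i)%nat -> markov_order n Ps P0 (y i J)).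
      { induction J; intros HJ.
        - eapply MO_ext. apply IHi; lia. intros l. unfold y, V. simpl. ring.
        - eapply MO_trans. apply IHJ; lia. apply Step; lia. }
      eapply MO_ext. apply (Inner i); lia. intros l. unfold y, V, W. simpl. ring. }
  set (P1 := fun l => P0 l + eps * W n l).
  assert (Hv : forall l, (l < n)%nat -> W n l = P l - P0 l).
  { intros l Hl. rewrite HP by auto. unfold W, T. ring. }
  assert (HP1 : veq n P1 P0).
  { apply Hmin.
    - split.
      + intros l Hl. unfold P1. pose proof (abs_between _ _ (Wabs n l (le_n n))). fold C in H.
        pose proof (Hpmb l Hl I). nra.
      + unfold P1. rewrite rsum_plus, rsum_scal, Wsum, HP01 by lia. ring.
    - intros r Hr. unfold P1.
      rewrite (rsum_ext n _ (fun j => m r j * P0 j + eps * (m r j * P j - m r j * P0 j))).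
      + rewrite rsum_plus, rsum_scal, rsum_minus, HL, HL0 by auto. ring.
      + intros j Hj. rewrite Hv by auto. ring.
    - apply Outer; lia. }
  intros l Hl. specialize (HP1 l Hl). unfold P1 in HP1.
  assert (W n l = 0) by (apply (Rmult_eq_reg_l eps); [lra|lra]).
  pose proof (Hv l Hl). lra.
Qed.

Theorem corollary1 (n : nat) (Ps : nat -> R) (k : nat) (m : nat -> nat -> R)
    (M : nat -> R) (P0 : nat -> R) :
  (2 <= n)%nat ->
  simplex_pos n Ps ->
  (forall j, (j < n)%nat -> m 0%nat j = 1) -> M 0%nat = 1 ->
  (exists P, simplex_pos n P /\ inL n k m M P) ->
  simplex_pos n P0 -> inL n k m M P0 ->
  ((forall P1, simplex_pos n P1 -> inL n k m M P1 ->
      markov_order n Ps P0 P1 -> veq n P1 P0)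
   <->
   (forall P, in_P0_plus_Q n Ps P0 P -> inL n k m M P -> veq n P P0)).
Proof.
  intros Hn HPs Hm HM _ HP0 HL0. split.
  - intros H. apply (dir_fwd n Ps k m M P0); auto.
  - intros H. apply (dir_back n Ps k m M P0); auto.
Qed.
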